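(* There exist capacitated network graphs $G=(V,E)$ with arbitrarily many vertices, together with sets $\mathcal{D}$ of possible demand matrices, such that every per-destination routing $\phi$ on $G$ satisfies $PERF(\phi,\mathcal{D})=\Omega(|V|)$; i.e., the performance ratio of the optimal oblivious per-destination routing is $\Omega(|V|)$.
   Context: A network is a directed graph $G=(V,E)$ with a positive (possibly arbitrarily large) capacity $c_e$ on each edge $e$. A routing configuration $\phi$ assigns to each destination $t\in V$ and each edge $e=(u,v)\in E$ a value $\phi_t(e)\ge 0$, the fraction of the flow destined to $t$ entering $u$ that is forwarded on $e$, with $\sum_{e=(u,v)\in E}\phi_t(e)=1$ for every $u\neq t$. It is a per-destination (PD) routing if for every $t\in V$ and every directed cycle $C$ of $G$ there is an edge $e\in C$ with $\phi_t(e)=0$. For a PD routing, $f_{st}(s)=1$ and $f_{st}(v)=\sum_{e=(u,v)\in E}f_{st}(u)\phi_t(e)$ for $v\ne s$. For a demand matrix $D=(d_{st})$ with $d_{st}\ge0$, $MxLU(\phi,D)=\max_{e=(u,v)\in E}\frac{\sum_{s,t}d_{st}f_{st}(u)\phi_t(e)}{c_e}$, $OPTU(D)=\min_{\phi\text{ PD routing}}MxLU(\phi,D)$, and $PERF(\phi,\mathcal{D})=\max_{D\in\mathcal{D}}MxLU(\phi,D)/OPTU(D)$. *)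

(* Defs.v *)
From HB Require Import structures.
From mathcomp Require Import all_boot all_order all_algebra.
From mathcomp Require Import classical_sets reals constructive_ereal ereal.
Set Implicit Arguments. Unset Strict Implicit. Unset Printing Implicit Defensive.
Import Order.TTheory GRing.Theory Num.Theory.
Local Open Scope ring_scope.
Local Open Scope classical_set_scope.

Section Network.
Variables (R : realType) (V : finType).
Variable E : {set V * V}.
Variable cap : V * V -> R.

Definition routing_config (phi : V -> V * V -> R) : Prop :=
  forall t : V,
    (forall e, e \in E -> 0 <= phi t e) /\
    (forall u : V, u != t -> \sum_(e in E | e.1 == u) phi t e = 1).

Definition edge_rel : rel V := fun u v => (u, v) \in E.

Definition PD_routing (phi : V -> V * V -> R) : Prop :=
  routing_config phi /\
  forall (t : V) (C : seq V), C != [::] -> cycle edge_rel C ->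
    ~~ cycle (fun u v => phi t (u, v) != 0) C.

(* For a PD routing the support of phi_t is acyclic, so this system has a unique
   solution, reached after #|V| iterations of the defining equations started
   from the indicator of s. *)
Definition flow_step (phi : V -> V * V -> R) (s t : V) (g : V -> R) (v : V) : R :=
  if v == s then 1 else \sum_(e in E | e.2 == v) g e.1 * phi t e.

Definition flow (phi : V -> V * V -> R) (s t : V) : V -> R :=
  iter #|V| (flow_step phi s t) (fun v => if v == s then 1 else 0).

Definition load (phi : V -> V * V -> R) (D : V -> V -> R) (e : V * V) : R :=
  \sum_(s : V) \sum_(t : V) D s t * flow phi s t e.1 * phi t e.

(* MxLU(phi, D) = max_{e in E} load(e) / c_e  (loads are >= 0). *)
Definition MxLU (phi : V -> V * V -> R) (D : V -> V -> R) : R :=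
  \big[Num.max/0]_(e in E) (load phi D e / cap e).

Definition OPTU (D : V -> V -> R) : \bar R :=
  ereal_inf [set (MxLU phi D)%:E | phi in PD_routing].

Definition PERF (phi : V -> V * V -> R) (Ds : set (V -> V -> R)) : \bar R :=
  ereal_sup [set ((MxLU phi D)%:E / OPTU D)%E | D in Ds].

End Network.

(* Main.v *)
Require Import Defs.
From HB Require Import structures.
From mathcomp Require Import all_boot all_order all_algebra.
From mathcomp Require Import classical_sets reals constructive_ereal ereal.
From mathcomp Require Import lra.
Import Order.TTheory GRing.Theory Num.Theory.
Local Open Scope ring_scope.
Local Open Scope classical_set_scope.

Section Gen.
Set Implicit Arguments. Unset Strict Implicit.
Variables (R : realType) (V : finType).

Definition Ec : {set V * V} := [set e | e.1 != e.2].

Lemma sum_out (F : V * V -> R) u :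
  \sum_(e in Ec | e.1 == u) F e = \sum_(v | v != u) F (u, v).
Proof.
rewrite (eq_bigl (fun p => (p.1 == u) && (p.2 != p.1))); last first.
  by move=> [a b]; rewrite /Ec inE /= andbC [b == a]eq_sym.
transitivity (\sum_(p | (p.1 == u) && (p.2 != p.1)) F (p.1, p.2)).
  by apply: eq_bigr => -[].
rewrite -(pair_big_dep (fun i => i == u) (fun i j => j != i) (fun a b => F (a, b))).
by rewrite big_pred1_eq.
Qed.

Lemma path_rank (r : rel V) (rk : V -> nat) :
  (forall u v, r u v -> (rk u < rk v)%N) ->
  forall x s, path r x s -> (rk x + size s <= rk (last x s))%N.
Proof.
move=> H x s; elim: s x => [|y s IH] x /=; first by rewrite addn0.
move=> /andP [rxy p]; have := IH y p; have := H _ _ rxy.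
by rewrite addnS; move=> h1 h2; apply: leq_trans h2; rewrite ltn_add2r.
Qed.

Lemma no_cycle_rank (r : rel V) (rk : V -> nat) (C : seq V) :
  (forall u v, r u v -> (rk u < rk v)%N) -> C != [::] -> ~~ cycle r C.
Proof.
move=> H; case: C => // a s _; apply/negP => /= Hp.
have := path_rank H Hp; rewrite last_rcons size_rcons addnS.
by rewrite ltnNge leq_addr.
Qed.

Lemma sum_in (F : V * V -> R) v :
  \sum_(e in Ec | e.2 == v) F e = \sum_(u | u != v) F (u, v).
Proof.
rewrite (eq_bigl (fun p => (p.2 == v) && (p.1 != p.2))); last first.
  by move=> [a b]; rewrite /Ec inE /= andbC.
rewrite (reindex (fun p : V * V => (p.2, p.1))) /=; last first.
  by exists (fun p : V * V => (p.2, p.1)) => -[a b].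
transitivity (\sum_(p | (p.1 == v) && (p.2 != p.1)) F (p.2, p.1)).
  by apply: eq_bigr => -[].
rewrite -(pair_big_dep (fun i => i == v) (fun i j => j != i) (fun a b => F (b, a))).
by rewrite big_pred1_eq.
Qed.

Lemma sum_ind (a u : V) : a != u ->
  \sum_(v | v != u) (if v == a then 1 else 0 : R) = 1.
Proof.
move=> au; rewrite (bigD1 a) //= eqxx big1 ?addr0 // => v /andP [_ /negPf ->].
by [].
Qed.

Lemma le_bigmax_seq (I : eqType) (r : seq I) (P : pred I) (F : I -> R) i :
  i \in r -> P i -> F i <= \big[Num.max/0]_(j <- r | P j) F j.
Proof.
elim: r => // a r IH; rewrite inE big_cons => /orP [/eqP <- ->|ir Pi].
  by rewrite le_max lexx.
have := IH ir Pi; case: (P a) => // h; by rewrite le_max h orbT.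
Qed.

Lemma bigmax_ge0 (I : Type) (r : seq I) (P : pred I) (F : I -> R) :
  0 <= \big[Num.max/0]_(j <- r | P j) F j.
Proof.
elim: r => [|a r IH]; first by rewrite big_nil.
by rewrite big_cons; case: (P a) => //; rewrite le_max IH orbT.
Qed.

Lemma bigmax_le (I : Type) (r : seq I) (P : pred I) (F : I -> R) c :
  0 <= c -> (forall i, P i -> F i <= c) ->
  \big[Num.max/0]_(j <- r | P j) F j <= c.
Proof.
move=> c0 H; elim: r => [|a r IH]; first by rewrite big_nil.
by rewrite big_cons; case Pa: (P a) => //; rewrite ge_max IH H.
Qed.

Lemma iter_src (phi : V -> V * V -> R) s t' k :
  iter k (flow_step Ec phi s t') (fun v => if v == s then 1 else 0) s = 1.
Proof. by case: k => [|k] /=; rewrite ?/flow_step eqxx. Qed.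

Lemma flow_src (phi : V -> V * V -> R) s t' : flow Ec phi s t' s = 1.
Proof. exact: iter_src. Qed.

Lemma fun_loop (f : V -> V) x0 :
  exists i k, (0 < k)%N /\ iter k f (iter i f x0) = iter i f x0.
Proof.
pose g := fun i : 'I_(#|V|.+1) => iter i f x0.
have : ~~ injectiveb g.
  by apply/negP => /injectiveP inj; have := leq_card _ inj; rewrite card_ord ltnn.
case/injectivePn => a [b] ab gab.
case: (ltngtP a b) => h.
- exists a, (b - a)%N; split; first by rewrite subn_gt0.
  by rewrite -iterD subnK ?(ltnW h) //; exact: esym.
- exists b, (a - b)%N; split; first by rewrite subn_gt0.
  by rewrite -iterD subnK ?(ltnW h).
- by move: ab; rewrite (val_inj h) eqxx.
Qed.

Lemma cycle_traject (f : V -> V) y k :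
  (0 < k)%N -> iter k f y = y -> fcycle f (traject f y k).
Proof.
case: k => // k _ H; rewrite trajectS /=.
by rewrite -[X in rcons _ X]H iterSr -trajectSr; exact: fpath_traject.
Qed.

Variable t : V.

Definition Dx (x : V) : V -> V -> R :=
  fun s t' => if (s == x) && (t' == t) then 1 else 0.

Lemma load_Dx phi x e : load Ec phi (Dx x) e = flow Ec phi x t e.1 * phi t e.
Proof.
rewrite /load (bigD1 x) //= [X in _ + X]big1 ?addr0; last first.
  by move=> s sx; apply: big1 => t' _; rewrite /Dx (negPf sx) !mul0r.
rewrite (bigD1 t) //= [X in _ + X]big1 ?addr0; last first.
  by move=> t' tt; rewrite /Dx (negPf tt) andbF !mul0r.
by rewrite /Dx !eqxx /= mul1r.
Qed.

Lemma sink_exists (phi : V -> V * V -> R) x0 :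
  PD_routing Ec phi -> x0 != t -> exists x, x != t /\ phi t (x, t) = 1.
Proof.
move=> [Hcfg Hcyc] x0t.
case: (boolP [exists x, (x != t) && [forall y, ((y != x) && (y != t)) ==> (phi t (x, y) == 0)]]).
  case/existsP => x /andP [xt /forallP H]; exists x; split => //.
  have := (Hcfg t).2 x xt; rewrite sum_out (bigD1 t) /=; last by rewrite eq_sym.
  rewrite big1 ?addr0 // => y /andP [yx yt].
  by apply/eqP; have := H y; rewrite yx yt.
move=> /existsPn H.
pose f := fun u => if [pick y | (y != u) && (y != t) && (phi t (u, y) != 0)] is Some y then y else u.
have Hf : forall u, u != t -> [/\ f u != u, f u != t & phi t (u, f u) != 0].
  move=> u ut; rewrite /f; case: pickP => [y /andP [/andP [yu yt] nz] // | none].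
  have := H u; rewrite ut /= => /forallPn [y]; rewrite negb_imply => /andP [c nz].
  by have := none y; rewrite c nz.
have Hit : forall m z, z != t -> iter m f z != t.
  by elim=> [|m IH] z zt //=; case: (Hf _ (IH z zt)).
have [i [k [k0 Hk]]] := fun_loop f x0.
set y := iter i f x0 in Hk.
have yt : y != t by apply: Hit.
have cyc := cycle_traject k0 Hk.
have allC : all (fun v => v != t) (traject f y k).
  by apply/allP => v /trajectP [m _ ->]; apply: Hit.
have ne : traject f y k != [::] by case: k k0 {Hk cyc allC}.
have ce : cycle (edge_rel Ec) (traject f y k).
  apply: (sub_in_cycle _ allC cyc) => u v ut vt /eqP <-.
  by rewrite /edge_rel /Ec inE /= eq_sym; case: (Hf u ut).
have cp : cycle (fun u v => phi t (u, v) != 0) (traject f y k).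
  apply: (sub_in_cycle _ allC cyc) => u v ut vt /eqP <-.
  by case: (Hf u ut).
by have := Hcyc t _ ne ce; rewrite cp.
Qed.

Definition w : R := ((#|V|.-1)%:R)^-1.

Lemma w_ge0 : 0 <= w.
Proof. by rewrite /w invr_ge0 ler0n. Qed.

Definition psi (x : V) : V -> V * V -> R := fun t' e =>
  if t' == t then
    (if e.1 == x then (if e.2 != x then w else 0)
     else if e.1 == t then 0 else if e.2 == t then 1 else 0)
  else (if (e.1 != t') && (e.2 == t') then 1 else 0).

Lemma psi_PD x : x != t -> PD_routing Ec (psi x).
Proof.
move=> xt; have hV : (0 < #|V|.-1)%N.
  by rewrite -(cardC1 x); apply/card_gt0P; exists t; rewrite !inE eq_sym.
split.
- move=> t'; split.
    move=> e _; rewrite /psi; case: ifP => _.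
      by case: ifP => _; [case: ifP => _; rewrite ?w_ge0 |
                          case: ifP => _ //; case: ifP => _].
    by case: ifP.
  move=> u ut'; rewrite sum_out /psi; case: eqP => [Et|nt] /=.
    subst t'; case: (u =P x) => [->|ux].
      transitivity (\sum_(v in predC1 x) w).
        by apply: eq_bigr => v /= vx; rewrite vx.
      rewrite sumr_const cardC1 -mulr_natl /w mulfV //.
      by rewrite pnatr_eq0 -lt0n.
    by rewrite (negPf ut') sum_ind // eq_sym.
  by rewrite ut' /= sum_ind // eq_sym.
- move=> t' C ne _.
  apply: (no_cycle_rank (rk := if t' == t then
      (fun v => if v == x then 0%N else if v == t then 2%N else 1%N)
      else (fun v => if v == t' then 1%N else 0%N))) ne.
  move=> u v; rewrite /psi /=; case: ifP => _.
    case: (u =P x) => [_|ux].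
      by case: (v =P x) => [_|vx] /=; rewrite ?eqxx //; case: (v == t).
    case: (u =P t) => [_|ut]; first by rewrite eqxx.
    case: (v =P t) => [vt|vt]; last by rewrite eqxx.
    by subst v; rewrite [t == x]eq_sym (negPf xt).
  case: (u =P t') => [_|ut'] /=; first by rewrite eqxx.
  by case: (v =P t') => [_|vt'] /=; rewrite ?eqxx.
Qed.

Lemma flow_psi x y : y != x -> y != t -> flow Ec (psi x) x t y = w.
Proof.
move=> yx yt; have h0 : (0 < #|V|)%N by apply/card_gt0P; exists x.
rewrite /flow -(prednK h0) /= /flow_step (negPf yx) sum_in.
rewrite (bigD1 x) /=; last by rewrite eq_sym.
rewrite iter_src big1 ?addr0.
  by rewrite /psi eqxx /= eqxx yx mul1r.
move=> u /andP [uy ux]; rewrite /psi eqxx /= (negPf ux).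
by case: ifP => _; rewrite ?(negPf yt) mulr0.
Qed.

Lemma MxLU_psi x : x != t -> MxLU Ec (fun _ => 1) (psi x) (Dx x) <= w.
Proof.
move=> xt; rewrite /MxLU; apply: bigmax_le; first exact: w_ge0.
move=> [a b] _; rewrite divr1 load_Dx /=.
case: (a =P x) => [->|ax].
  by rewrite flow_src mul1r /psi eqxx /= eqxx; case: ifP => _; rewrite ?w_ge0.
case: (a =P t) => [->|a_t].
  by rewrite /psi eqxx /= [t == x]eq_sym (negPf xt) mulr0 w_ge0.
rewrite flow_psi; try exact/eqP.
rewrite /psi eqxx /=; have /negPf -> : a != x by exact/eqP.
have /negPf -> : a != t by exact/eqP.
by case: ifP => _; rewrite ?mulr1 ?mulr0 ?w_ge0.
Qed.

Lemma MxLU_ge0 (E : {set V * V}) (cap : V * V -> R) (phi : V -> V * V -> R) (D : V -> V -> R) : 0 <= MxLU E cap phi D.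
Proof. exact: bigmax_ge0. Qed.

Lemma MxLU_ge (E : {set V * V}) (cap : V * V -> R) (phi : V -> V * V -> R) (D : V -> V -> R) e :
  e \in E -> load E phi D e / cap e <= MxLU E cap phi D.
Proof.
move=> eE; rewrite /MxLU.
by apply: (@le_bigmax_seq _ _ _ (fun e => load E phi D e / cap e)) => //; rewrite mem_index_enum.
Qed.

End Gen.

Theorem theorem2 (R : realType) :
  exists c : R, 0 < c /\
  forall N : nat,
    exists (V : finType) (E : {set V * V}) (cap : V * V -> R)
           (Ds : set (V -> V -> R)),
      (N <= #|V|)%N /\
      (forall e, e \in E -> 0 < cap e) /\
      (forall u v : V, connect (edge_rel E) u v) /\
      (forall D, Ds D -> forall s t, 0 <= D s t) /\
      (forall phi, PD_routing E phi ->
         ((c * #|V|%:R)%:E <= PERF E cap phi Ds)%E).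
Proof.
exists (2^-1); split; first by rewrite invr_gt0 ltr0n.
move=> N.
pose t : 'I_N.+2 := ord0.
exists ('I_N.+2 : finType), (Ec 'I_N.+2), (fun _ => 1%R : R),
  [set D | exists x, x != t /\ D = Dx R t x].
split; first by rewrite card_ord; apply: leqW; apply: leqnSn.
split; first by move=> *; exact: ltr01.
split.
  move=> u v; case: (u =P v) => [->|uv]; first exact: connect0.
  by apply: connect1; rewrite /edge_rel /Ec inE /=; apply/eqP.
split.
  move=> D [x [_ ->]] s t'; rewrite /Dx; case: ifP => _ //; exact: ler01.
move=> phi Hphi.
have x0t : (ord_max : 'I_N.+2) != t by [].
have [x [xt phix]] := sink_exists Hphi x0t.
have M1 : 1 <= MxLU (Ec 'I_N.+2) (fun _ => 1%R : R) phi (Dx R t x).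
  have := @MxLU_ge R _ (Ec _) (fun _ => 1%R : R) phi (Dx R t x) (x, t).
  rewrite divr1 load_Dx flow_src /= phix mul1r; apply.
  by rewrite /Ec inE /=.
have O0 : (0 <= OPTU (Ec 'I_N.+2) (fun _ => 1%R : R) (Dx R t x))%E.
  by apply: le_ereal_inf_tmp => y [psi' _ <-]; rewrite lee_fin MxLU_ge0.
have Ow : (OPTU (Ec 'I_N.+2) (fun _ => 1%R : R) (Dx R t x) <= (w R 'I_N.+2)%:E)%E.
  apply: ge_ereal_inf; exists (MxLU (Ec 'I_N.+2) (fun _ => 1%R : R) (psi R t x) (Dx R t x))%:E.
    by exists (psi R t x) => //; exact: psi_PD.
  by rewrite lee_fin; exact: MxLU_psi.
apply: le_trans (ereal_sup_ubound _); last first.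
  by exists (Dx R t x) => //; exists x.
move: O0 Ow; case: (OPTU _ _ _) => [r| |] //.
rewrite !lee_fin => r0 rw.
case: (eqVneq r 0) => [->|rn0].
  by rewrite inve0 mulry gtr0_sg ?(lt_le_trans ltr01 M1) // mul1e leey.
rewrite inver (negPf rn0) -EFinM lee_fin.
have rp : 0 < r by rewrite lt_neqAle eq_sym rn0 r0.
have h1 : (N.+1)%:R <= r^-1.
  rewrite -div1r ler_pdivlMr //; apply: le_trans (ler_wpM2l (ler0n _ _) rw) _.
  by rewrite /w card_ord /= mulfV // pnatr_eq0.
have hr : 0 <= r^-1 by rewrite invr_ge0.
apply: (le_trans _ (ler_peMl hr M1)).
apply: le_trans h1; rewrite card_ord.
have -> : (N.+2)%:R = N%:R + 2 :> R by rewrite -addn2 natrD.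
have -> : (N.+1)%:R = N%:R + 1 :> R by rewrite -addn1 natrD.
have : 0 <= N%:R :> R by exact: ler0n.
lra.
Qed.
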